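(* Let $n\ge 1$ and let $\mathcal{C}$ be an $n$-qubit quantum channel (CPTP map) with entanglement fidelity $F(\mathcal{C})\neq 0$. Let $\mathcal{E}=\{(p_i,U_i)\}_{i=0}^{K-1}$ be an ensemble of $n$-qubit unitaries such that $\mathbb{E}_{\mathcal{E}}(\mathcal{C})=\mathcal{D}_{F(\mathcal{C})}$. Let $\mathcal{V}=\{((2^n+1)^{-1},V_j^\dagger)\}_{j=0}^{2^n}$ and $\mathcal{M}$ be as in the context. Then the $n$-qubit identity channel admits the quasiprobability decomposition $$\mathcal{I}^{\otimes n}=\frac{1}{F(\mathcal{C})}\,\mathbb{E}_{\mathcal{E}}(\mathcal{C})-\left(\frac{1}{F(\mathcal{C})}-1\right)\mathbb{E}_{\mathcal{V}}(\mathcal{M}).$$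
   Context: Entanglement fidelity: $F(\mathcal{C})=\langle\Phi_n|(\mathcal{I}^{\otimes n}\otimes\mathcal{C})(|\Phi_n\rangle\langle\Phi_n|)|\Phi_n\rangle$ with $|\Phi_n\rangle=2^{-n/2}\sum_{\vec k\in\{0,1\}^n}|\vec k\rangle|\vec k\rangle$. Pauli operators: for $\vec a\in\{0,1\}^n$, $X_{\vec a}=\bigotimes_i X^{a_i}$, $Z_{\vec a}=\bigotimes_i Z^{a_i}$; $\mathcal{Q}_n=\{X_{\vec x}Z_{\vec z}\}$ is the Pauli group modulo phases and $\mathcal{Q}_n^*=\mathcal{Q}_n\setminus\{I^{\otimes n}\}$. Depolarizing channel: $\mathcal{D}_p(\varphi)=p\varphi+\frac{1-p}{2^{2n}-1}\sum_{P\in\mathcal{Q}_n^*}P\varphi P$. For an ensemble $\mathcal{E}=\{(p_i,U_i)\}$, the twirl is $\mathbb{E}_{\mathcal{E}}(\mathcal{C})(\rho)=\sum_ip_iU_i^\dagger\mathcal{C}(U_i\rho U_i^\dagger)U_i$. The set $\mathcal{Q}_n^*$ is partitioned into $2^n+1$ maximally commuting subsets $S_0,\dots,S_{2^n}$ (each of $2^n-1$ pairwise commuting operators), and $V_j$ is a unitary with $S_j=\{s_{j,\vec a}V_jZ_{\vec a}V_j^\dagger:\vec a\ne\vec 0\}$, $s_{j,\vec a}\in\{\pm1\}$. $\mathcal{V}$ is the uniform ensemble over $V_0^\dagger,\dots,V_{2^n}^\dagger$, so $\mathbb{E}_{\mathcal{V}}(\mathcal{M})(\rho)=\frac{1}{2^n+1}\sum_jV_j\mathcal{M}(V_j^\dagger\rho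 V_j)V_j^\dagger$. $\mathcal{M}(\rho)=\sum_{\vec k}\operatorname{tr}[|\vec k\rangle\langle\vec k|\rho]\rho_{\vec k}$ with $\rho_{\vec k}=\frac{1}{2^n-1}\sum_{\vec l\neq\vec k}|\vec l\rangle\langle\vec l|$. *)

(* Defs.v *)
From HB Require Import structures.
From mathcomp Require Import all_boot all_order all_algebra.
Set Implicit Arguments. Unset Strict Implicit. Unset Printing Implicit Defensive.
Import Order.TTheory GRing.Theory Num.Theory.
Local Open Scope ring_scope.

Section Defs.
Variable C : numClosedFieldType.

Definition dag m p (A : 'M[C]_(m, p)) : 'M[C]_(p, m) := (map_mx Num.conj A)^T.

Definition unitary m (U : 'M[C]_m) : Prop := U *m dag U = 1%:M.

Definition psd m (A : 'M[C]_m) : Prop :=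
  dag A = A /\ forall v : 'cV[C]_m, 0 <= (dag v *m A *m v) 0 0.

(* bipartite index k of C^m (x) C^d  <->  pair (a, k') *)
Definition idx_pair m d (k : 'I_(m * d)) : 'I_m * 'I_d :=
  enum_val (cast_ord (esym (mxvec_cast m d)) k).

(* (I_m (x) Ch)(X): Ch applied blockwise (the linear extension of id (x) Ch) *)
Definition ext_id m d (Ch : 'M[C]_d -> 'M[C]_d) (X : 'M[C]_(m * d)) : 'M[C]_(m * d) :=
  \matrix_(i, j)
    (Ch (\matrix_(k, l) X (mxvec_index (idx_pair i).1 k) (mxvec_index (idx_pair j).1 l)))
      (idx_pair i).2 (idx_pair j).2.

Definition is_channel d (Ch : 'M[C]_d -> 'M[C]_d) : Prop :=
  [/\ linear Ch,
      (forall m (X : 'M[C]_(m * d)), psd X -> psd (ext_id Ch X))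
    & (forall X, \tr (Ch X) = \tr X)].

Definition Phi n : 'cV[C]_(2 ^ n * 2 ^ n) :=
  \col_i (if (idx_pair i).1 == (idx_pair i).2 then (sqrtC (2 ^ n)%:R)^-1 else 0).

Definition ent_fid n (Ch : 'M[C]_(2 ^ n) -> 'M[C]_(2 ^ n)) : C :=
  (dag (Phi n) *m ext_id Ch (Phi n *m dag (Phi n)) *m Phi n) 0 0.

Definition bit (k i : nat) : bool := odd (k %/ 2 ^ i).

(* X_a = (x)_i X^{a_i} : |k> |-> |k xor a> *)
Definition Xop n (a : 'I_(2 ^ n)) : 'M[C]_(2 ^ n) :=
  \matrix_(j, k) ([forall i : 'I_n, bit j i == (bit k i (+) bit a i)])%:R.

(* Z_z = (x)_i Z^{z_i} : |k> |-> (-1)^{z.k} |k> *)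
Definition Zop n (z : 'I_(2 ^ n)) : 'M[C]_(2 ^ n) :=
  \matrix_(j, k) ((j == k)%:R * (-1) ^+ (\sum_(i < n) (bit z i && bit k i))).

(* Pauli group modulo phases: indexed by (x, z), operator X_x Z_z *)
Definition pauli n (P : 'I_(2 ^ n) * 'I_(2 ^ n)) : 'M[C]_(2 ^ n) :=
  Xop P.1 *m Zop P.2.

Definition nonzero_idx n (a : 'I_(2 ^ n)) : bool := (a : nat) != 0%N.

Definition Qstar n : {set 'I_(2 ^ n) * 'I_(2 ^ n)} :=
  [set P | nonzero_idx P.1 || nonzero_idx P.2].

Definition depol n (p : C) (rho : 'M[C]_(2 ^ n)) : 'M[C]_(2 ^ n) :=
  p *: rho + ((1 - p) / ((4 ^ n)%:R - 1)) *:
     \sum_(P in Qstar n) (pauli P *m rho *m dag (pauli P)).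

Definition twirl d K (p : 'I_K -> C) (U : 'I_K -> 'M[C]_d)
    (Ch : 'M[C]_d -> 'M[C]_d) (rho : 'M[C]_d) : 'M[C]_d :=
  \sum_(i < K) p i *: (dag (U i) *m Ch (U i *m rho *m dag (U i)) *m U i).

Definition rho_k n (k : 'I_(2 ^ n)) : 'M[C]_(2 ^ n) :=
  ((2 ^ n)%:R - 1)^-1 *: \sum_(l < 2 ^ n | l != k) delta_mx l l.

Definition Mchan n (rho : 'M[C]_(2 ^ n)) : 'M[C]_(2 ^ n) :=
  \sum_(k < 2 ^ n) \tr (delta_mx k k *m rho) *: rho_k k.

Definition twirlV n (V : 'I_(2 ^ n).+1 -> 'M[C]_(2 ^ n)) (rho : 'M[C]_(2 ^ n)) :=
  twirl (fun _ => ((2 ^ n).+1%:R)^-1) (fun j => dag (V j)) (@Mchan n) rho.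

Definition good_partition n (S : 'I_(2 ^ n).+1 -> {set 'I_(2 ^ n) * 'I_(2 ^ n)})
    (V : 'I_(2 ^ n).+1 -> 'M[C]_(2 ^ n)) : Prop :=
  [/\ (forall j j', j != j' -> [disjoint S j & S j']),
      \bigcup_j S j = Qstar n,
      (forall j, #|S j| = (2 ^ n - 1)%N),
      (forall j, {in S j &, forall P Q, pauli P *m pauli Q = pauli Q *m pauli P})
    & (forall j, unitary (V j))] /\
  (forall j, 
(forall a, nonzero_idx a -> exists2 P, P \in S j &
          exists s : C, `|s| = 1 /\ V j *m Zop a *m dag (V j) = s *: pauli P) /\
     (forall P, P \in S j -> exists2 a, nonzero_idx a &
          exists s : C, `|s| = 1 /\ V j *m Zop a *m dag (V j) = s *: pauli P)).

End Defs.

(* Main.v *)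
Require Import Defs.
From mathcomp Require Import all_boot all_order all_algebra all_fingroup ring zify.
From Stdlib Require PeanoNat.
Import Order.TTheory GRing.Theory Num.Theory.
Module PN := PeanoNat.Nat.
Set Implicit Arguments. Unset Strict Implicit.

Lemma powE m k : m ^ k = PN.pow m k.
Proof. elim: k => // k IH. by rewrite expnS IH PN.pow_succ_r'. Qed.
Lemma divE (k m : nat) : (0 < m)%N -> k %/ m = PN.div k m.
Proof. move=> m0. apply: (PN.div_unique _ _ _ (k %% m)). have := ltn_pmod k m0. lia. rewrite {1}(divn_eq k m). lia. Qed.
Lemma oddE (k : nat) : odd k = PN.odd k.
Proof. elim/ltn_ind: k => -[|[|k]] IH //. rewrite PN.odd_succ_succ /= negbK IH //. Qed.
Lemma bitE k i : bit k i = PN.testbit k i.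
Proof. by rewrite /bit divE ?expn_gt0 // oddE -PN.bit0_odd powE PN.div_pow2_bits. Qed.

Lemma high_bits n a m : (a < 2 ^ n)%N -> (n <= m)%N -> PN.testbit a m = false.
Proof.
move=> an nm; case: (posnP a) => [->|a0]; first exact: PN.bits_0.
apply: PN.bits_above_log2.
have : (PN.log2 a < n)%coq_nat.
  have a0' : (0 < a)%coq_nat by apply/ssrnat.ltP.
  apply (proj1 (PN.log2_lt_pow2 a n a0')).
  by rewrite -powE; apply/ssrnat.ltP.
move=> h. have : (PN.log2 a < m)%N by apply: leq_trans nm; apply/ssrnat.ltP. move/ssrnat.ltP. done.
Qed.

Lemma lxor_lt n a b : (a < 2 ^ n)%N -> (b < 2 ^ n)%N -> (PN.lxor a b < 2 ^ n)%N.
Proof.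
move=> an bn; set x := PN.lxor a b.
case: (posnP x) => [->|x0]; first by rewrite expn_gt0.
rewrite powE; apply/ssrnat.ltP.
have x0' : (0 < x)%coq_nat by apply/ssrnat.ltP.
apply (proj2 (PN.log2_lt_pow2 x n x0')).
case: (ltnP (PN.log2 x) n) => [/ssrnat.ltP //|h].
have x0'' : x <> 0 by move=> e; rewrite e in x0.
have := PN.bit_log2 x x0''. by rewrite {1}/x PN.lxor_spec (high_bits an h) (high_bits bn h).
Qed.

Lemma bits_inj n (a b : 'I_(2 ^ n)) : (forall i : 'I_n, bit a i = bit b i) -> a = b.
Proof.
move=> h; apply: val_inj; apply: PN.bits_inj => m.
case: (ltnP m n) => [mn|nm]; first by have := h (Ordinal mn); rewrite !bitE.
by rewrite (high_bits (ltn_ord a) nm) (high_bits (ltn_ord b) nm).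
Qed.

Definition xo n (a b : 'I_(2 ^ n)) : 'I_(2 ^ n) := Ordinal (lxor_lt (ltn_ord a) (ltn_ord b)).

Lemma bit_xo n (a b : 'I_(2 ^ n)) i : bit (xo a b) i = bit a i (+) bit b i.
Proof. rewrite !bitE /=. rewrite PN.lxor_spec. by case: (PN.testbit a i); case: (PN.testbit b i). Qed.

Lemma xoK n (b : 'I_(2 ^ n)) : involutive (fun a : 'I_(2 ^ n) => xo a b).
Proof. move=> a; apply: val_inj => /=. by rewrite PN.lxor_assoc PN.lxor_nilpotent PN.lxor_0_r. Qed.

Lemma xoC n (a b : 'I_(2 ^ n)) : xo a b = xo b a.
Proof. apply: val_inj => /=; exact: PN.lxor_comm. Qed.

Lemma xoKl n (b : 'I_(2 ^ n)) : involutive (fun a : 'I_(2 ^ n) => xo b a).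
Proof. move=> a; rewrite xoC [xo b a]xoC; exact: xoK. Qed.

Lemma pow_lt n (i : 'I_n) : (2 ^ i < 2 ^ n)%N.
Proof. by rewrite ltn_exp2l. Qed.

Definition e2 n (i : 'I_n) : 'I_(2 ^ n) := Ordinal (pow_lt i).

Lemma bit_e2 n (i : 'I_n) (l : nat) : bit (e2 i) l = (l == i).
Proof. rewrite bitE /= powE PN.pow2_bits_eqb. case: (PN.eqb_spec i l) => [->|h]; first by rewrite eqxx.
by apply/esym/eqP => e; apply: h; rewrite e. Qed.

Lemma bit0 i : bit (0 : nat) i = false.
Proof. by rewrite bitE PN.bits_0. Qed.

Local Open Scope ring_scope.
Section Dag.
Variable C : numClosedFieldType.

Lemma dagM m p q (A : 'M[C]_(m, p)) (B : 'M[C]_(p, q)) : dag (A *m B) = dag B *m dag A.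
Proof. by rewrite /dag map_mxM trmx_mul. Qed.

Lemma dagK m p (A : 'M[C]_(m, p)) : dag (dag A) = A.
Proof. apply/matrixP => i j; rewrite /dag !mxE; exact: conjCK. Qed.

Lemma dagZ m p (c : C) (A : 'M[C]_(m, p)) : dag (c *: A) = c^* *: dag A.
Proof. apply/matrixP => i j; rewrite /dag !mxE rmorphM. done. Qed.

Lemma dag1 m : dag (1%:M : 'M[C]_m) = 1%:M.
Proof. apply/matrixP => i j; by rewrite /dag !mxE rmorph_nat eq_sym. Qed.

Lemma unitaryC m (V : 'M[C]_m) : unitary V -> dag V *m V = 1%:M.
Proof. rewrite /unitary; exact: mulmx1C. Qed.

Lemma trace_conj m (V : 'M[C]_m) (X : 'M[C]_m) : unitary V -> \tr (dag V *m X *m V) = \tr X.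
Proof. move=> hV. by rewrite mxtrace_mulC mulmxA hV mul1mx. Qed.


Variable n : nat.
Local Notation d := (2 ^ n)%N.
Local Notation I := 'I_(2 ^ n).

Definition sgn (a k : I) : C := (-1) ^+ (\sum_(i < n) (bit a i && bit k i)).

Lemma Zop_diag (a : I) : Zop C a = diag_mx (\row_k sgn a k).
Proof. apply/matrixP => i j; rewrite !mxE mulrC; by case: eqP => [->|]; rewrite ?mulr1 ?mulr0 ?mulr1n ?mulr0n. Qed.

Lemma conj_sgn a k : (sgn a k)^* = sgn a k.
Proof. exact: rmorph_sign. Qed.

Lemma dag_Zop (a : I) : dag (Zop C a) = Zop C a.
Proof.
apply/matrixP => i j; rewrite /dag !mxE rmorphM rmorph_nat rmorph_sign eq_sym.
by case: eqP => [->|]; rewrite ?mul0r.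
Qed.

Lemma Zconj (a : I) (X : 'M[C]_d) :
  Zop C a *m X *m dag (Zop C a) = \matrix_(i, j) (sgn a i * X i j * sgn a j).
Proof.
rewrite dag_Zop Zop_diag mul_diag_mx mul_mx_diag; apply/matrixP => i j; by rewrite !mxE.
Qed.

Lemma sgn_prod (a k : I) : sgn a k = \prod_(i < n) (-1) ^+ (bit a i && bit k i).
Proof. by rewrite /sgn (big_morph (fun m => (-1) ^+ m : C) (fun x y => exprD _ x y) (expr0 _)). Qed.

Lemma sgn_flip (a k : I) (i : 'I_n) : sgn (xo a (e2 i)) k = (-1) ^+ (bit k i) * sgn a k.
Proof.
rewrite !sgn_prod (bigD1 i) // [in RHS](bigD1 i) // mulrA; congr (_ * _).
  rewrite bit_xo bit_e2 eqxx. by case: (bit a i); case: (bit k i); rewrite ?expr0 ?expr1 ?mulr1 ?mulN1r ?opprK.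
apply: eq_bigr => l hl; have hl' : (l : nat) != i := hl. by rewrite bit_xo bit_e2 (negbTE hl') addbF.
Qed.

Lemma char_sum (j k : I) : \sum_(a : I) sgn a j * sgn a k = (j == k)%:R * d%:R.
Proof.
case: eqP => [<-|/eqP jk].
  rewrite mul1r (eq_bigr (fun _ => 1)); last by move=> a _; rewrite /sgn -exprD addnn -mul2n exprM sqrrN expr1n expr1n.
  by rewrite sumr_const card_ord.
rewrite mul0r.
have [i hi] : exists i : 'I_n, bit j i != bit k i.
  apply/existsP; apply: contraR jk => /existsPn H; apply/eqP; apply: bits_inj => i; apply/eqP; exact: negbNE (H i).
set S := \sum_a _.
have inj : injective (fun a : I => xo a (e2 i)) by apply: can_inj (xoK (e2 i)).
have HS : S = - S.
  rewrite {1}/S (reindex_inj inj) /= -sumrN; apply: eq_bigr => a _.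
  rewrite !sgn_flip. move: hi; case: (bit j i); case: (bit k i) => //= _; rewrite ?expr0 ?expr1 ?mul1r ?mulN1r;
  by rewrite ?mulrN ?mulNr ?opprK.
have : S *+ 2 == 0 by rewrite mulr2n {1}HS addNr.
by rewrite mulrn_eq0 /= => /eqP.
Qed.

Definition diagp (X : 'M[C]_d) : 'M[C]_d := \sum_(k : I) X k k *: delta_mx k k.

Lemma diagpE (X : 'M[C]_d) i j : diagp X i j = (i == j)%:R * X i i.
Proof.
rewrite /diagp summxE (bigD1 i) //= big1 ?addr0.
  rewrite !mxE eqxx /= mulrC eq_sym. done.
by move=> l hl; rewrite !mxE [i == l]eq_sym (negbTE hl) /= mulr0.
Qed.

Lemma Zavg (X : 'M[C]_d) : \sum_(a : I) Zop C a *m X *m dag (Zop C a) = d%:R *: diagp X.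
Proof.
apply/matrixP => i j; rewrite summxE !mxE diagpE.
rewrite (eq_bigr (fun a => X i j * (sgn a i * sgn a j))); last first.
  by move=> a _; rewrite Zconj mxE mulrCA mulrA.
rewrite -mulr_sumr char_sum.
case: eqP => [->|_]; rewrite ?mul0r ?mulr0 ?mul1r //. by rewrite mulrC.
Qed.

Lemma XopE (a j k : I) : Xop C a j k = (j == xo k a)%:R.
Proof.
rewrite mxE; congr ((nat_of_bool _) %:R).
apply/forallP/eqP => [H|->]; last by move=> i; rewrite bit_xo.
apply: bits_inj => i; rewrite bit_xo; exact/eqP/H.
Qed.

Definition xperm (a : I) : {perm I} := perm (can_inj (xoK a)).

Lemma Xop_perm (a : I) : Xop C a = perm_mx (xperm a).
Proof.
apply/matrixP => j k; rewrite XopE /perm_mx /row_perm !mxE perm.permE.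
congr ((nat_of_bool _) %:R); apply/eqP/eqP => [->|<-]; by rewrite xoK.
Qed.

Lemma dag_perm (s : {perm I}) : dag (perm_mx s : 'M[C]_d) = perm_mx s^-1.
Proof.
rewrite -tr_perm_mx /dag; congr (_^T); apply/matrixP => i j; by rewrite !mxE rmorph_nat.
Qed.

Lemma Xconj (a : I) (A : 'M[C]_d) i j :
  (Xop C a *m A *m dag (Xop C a)) i j = A (xo i a) (xo j a).
Proof.
rewrite Xop_perm dag_perm -row_permE -col_permE !mxE !perm.permE //.
Qed.

Lemma Xavg (X : 'M[C]_d) : \sum_(a : I) Xop C a *m diagp X *m dag (Xop C a) = \tr X *: 1%:M.
Proof.
apply/matrixP => i j; rewrite summxE !mxE.
rewrite (eq_bigr (fun a => (i == j)%:R * X (xo i a) (xo i a))); last first.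
  move=> a _; rewrite Xconj diagpE; congr ((nat_of_bool _) %:R * _).
  apply/idP/idP => /eqP h; apply/eqP; [exact: (can_inj (xoK a)) h | by rewrite h].
rewrite -mulr_sumr mulrC /mxtrace. congr (_ * _).
by rewrite (reindex_inj (can_inj (xoKl i))) /=; apply: eq_bigr => a _; rewrite xoKl.
Qed.

Lemma pauli_all (X : 'M[C]_d) :
  \sum_(P : I * I) pauli C P *m X *m dag (pauli C P) = d%:R *: (\tr X *: 1%:M).
Proof.
have -> : \sum_(P : I * I) pauli C P *m X *m dag (pauli C P) =
    \sum_(x : I) Xop C x *m (\sum_(z : I) Zop C z *m X *m dag (Zop C z)) *m dag (Xop C x).
  symmetry; transitivity (\sum_(x : I) \sum_(z : I) (pauli C (x, z) *m X *m dag (pauli C (x, z)))).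
    apply: eq_bigr => x _; rewrite mulmx_sumr mulmx_suml; apply: eq_bigr => z _.
    by rewrite /pauli dagM !mulmxA.
  by rewrite pair_bigA; apply: eq_bigr => -[x z].
rewrite -Xavg scaler_sumr; apply: eq_bigr => x _.
by rewrite Zavg -scalemxAr -scalemxAl.
Qed.

Lemma d_gt0 : (0 < d)%N. Proof. by rewrite expn_gt0. Qed.
Definition z0 : I := Ordinal d_gt0.

Lemma pauli0 : pauli C (z0, z0) = 1%:M.
Proof.
have X0 : Xop C z0 = 1%:M.
  apply/matrixP => j k; rewrite XopE !mxE; congr (_ %:R); congr (_ == _); apply: val_inj => /=.
  exact: PN.lxor_0_r.
have Z0 : Zop C z0 = 1%:M.
  apply/matrixP => j k; rewrite !mxE big1 ?expr0 ?mulr1 // => i _; by rewrite bit0.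
by rewrite /pauli X0 Z0 mulmx1.
Qed.

Lemma Qsum (X : 'M[C]_d) :
  \sum_(P in Qstar n) pauli C P *m X *m dag (pauli C P) = d%:R *: (\tr X *: 1%:M) - X.
Proof.
rewrite -pauli_all [in RHS](bigD1 (z0, z0)) //= pauli0 mul1mx dag1 mulmx1 addrC addrK.
apply: eq_bigl => -[x z]; rewrite inE /nonzero_idx /= xpair_eqE negb_and.
by congr (_ || _).
Qed.

Lemma diagp1 : diagp 1%:M = 1%:M.
Proof. apply/matrixP => i j; by rewrite diagpE !mxE eqxx mulr1. Qed.

Lemma sum_delta_neq (k : I) : \sum_(l < d | l != k) delta_mx l l = (1%:M : 'M[C]_d) - delta_mx k k.
Proof.
rewrite -[X in X - _]diagp1 /diagp [in RHS](bigD1 k) //= mxE eqxx mulr1n scale1r [delta_mx k k + _]addrC addrK.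
apply: eq_bigr => l _; by rewrite mxE eqxx mulr1n scale1r.
Qed.

Lemma tr_delta (k : I) (X : 'M[C]_d) : \tr (delta_mx k k *m X) = X k k.
Proof.
rewrite /mxtrace (bigD1 k) //= big1 ?addr0.
  rewrite mxE (bigD1 k) //= big1 ?addr0; first by rewrite mxE !eqxx mul1r.
  by move=> l hl; rewrite !mxE eqxx (negbTE hl) mul0r.
move=> l hl; rewrite mxE big1 // => m _; by rewrite mxE (negbTE hl) mul0r.
Qed.

Lemma Mchan_formula (X : 'M[C]_d) :
  Mchan X = ((d%:R - 1)^-1 : C) *: (\tr X *: 1%:M - diagp X).
Proof.
rewrite /Mchan /rho_k scalerBr /diagp scaler_sumr.
have -> : \tr X *: (1%:M : 'M[C]_d) = \sum_(k : I) X k k *: 1%:M by rewrite -scaler_suml.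
rewrite scaler_sumr -sumrB; apply: eq_bigr => k _.
by rewrite tr_delta sum_delta_neq scalerA mulrC -scalerA scalerBr scalerBr.
Qed.

Lemma Zop0 : Zop C z0 = 1%:M.
Proof. apply/matrixP => j k; rewrite !mxE big1 ?expr0 ?mulr1 // => i _; by rewrite bit0. Qed.

Lemma Zop_diag_entry (a : I) (i : 'I_n) : Zop C a (e2 i) (e2 i) = (-1) ^+ (bit a i).
Proof.
rewrite mxE eqxx mul1r (bigD1 i) //= big1 ?addn0.
  by rewrite bit_e2 eqxx andbT.
move=> l hl; have hl' : (l : nat) != i := hl. by rewrite bit_e2 (negbTE hl') andbF.
Qed.

Lemma Zop_inj (a b : I) : Zop C a = Zop C b -> a = b.
Proof.
move=> h; apply: bits_inj => i.
have := Zop_diag_entry a i; rewrite h Zop_diag_entry.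
case: (bit a i); case: (bit b i) => //= /eqP; rewrite ?expr0 ?expr1 ?eqxx //.
  by rewrite -subr_eq0 opprK (_ : 1 + 1 = 2%:R) // pnatr_eq0.
by rewrite eq_sym -subr_eq0 opprK (_ : 1 + 1 = 2%:R) // pnatr_eq0.
Qed.

Lemma Zop_z0 (a : I) : Zop C a z0 z0 = 1.
Proof. rewrite !mxE eqxx mul1r big1 ?expr0 // => i _; by rewrite andbC /= bit0. Qed.

Lemma conjZ (W M : 'M[C]_d) (c : C) : dag W *m (c *: M) *m W = c *: (dag W *m M *m W).
Proof. by rewrite -scalemxAr -scalemxAl. Qed.

Lemma key (W : 'M[C]_d) (S : {set I * I}) (X : 'M[C]_d) :
  unitary W -> #|S| = (d - 1)%N ->
  (forall a, nonzero_idx a -> exists2 P, P \in S &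
      exists s : C, `|s| = 1 /\ W *m Zop C a *m dag W = s *: pauli C P) ->
  \sum_(a : I) (W *m Zop C a *m dag W) *m X *m dag (W *m Zop C a *m dag W)
    = X + \sum_(P in S) pauli C P *m X *m dag (pauli C P).
Proof.
move=> hW hS H.
have [phi Hphi] : exists phi : I -> I * I, forall a, a != z0 -> phi a \in S /\
    exists s : C, `|s| = 1 /\ W *m Zop C a *m dag W = s *: pauli C (phi a).
  apply: (fin_all_exists (P := fun a P => a != z0 -> P \in S /\
    exists s : C, `|s| = 1 /\ W *m Zop C a *m dag W = s *: pauli C P)) => a.
  case: (boolP (a == z0)) => [/eqP ha|ha]; first by exists (z0, z0) => /eqP.
  have nz : nonzero_idx a by rewrite /nonzero_idx; apply: contra ha => /eqP e; apply/eqP/val_inj.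
  by case: (H a nz) => P hP hs; exists P.
rewrite (bigD1 z0) //= Zop0 mulmx1 hW mul1mx dag1 mulmx1; congr (_ + _).
set A := [set a : I | a != z0].
have conjK : forall Y, dag W *m (W *m Y *m dag W) *m W = Y.
  by move=> Y; rewrite !mulmxA (unitaryC hW) mul1mx -mulmxA (unitaryC hW) mulmx1.
have injphi : {in A &, injective phi}.
  move=> a b; rewrite !inE => ha hb e.
  case: (Hphi a ha) => _ [s [hs es]]; case: (Hphi b hb) => _ [t [ht et]].
  apply: Zop_inj.
  have E : t *: Zop C a = s *: Zop C b.
    by rewrite -[Zop C a]conjK -[Zop C b]conjK es et e !conjZ !scalerA mulrC.
  have ts : t = s.
    have : (t *: Zop C a) z0 z0 = (s *: Zop C b) z0 z0 by rewrite E.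
    by rewrite [LHS]mxE [RHS]mxE !Zop_z0 !mulr1.
  have t0 : t != 0 by rewrite -normr_eq0 ht oner_eq0.
  by apply: (scalerI t0); rewrite E ts.
transitivity (\sum_(a in A) pauli C (phi a) *m X *m dag (pauli C (phi a))).
  apply: eq_big => a; first by rewrite inE.
  move=> ha; case: (Hphi a ha) => _ [s [hs es]].
  rewrite es dagZ -scalemxAl -scalemxAl -scalemxAr scalerA -normCK hs expr1n scale1r //.
rewrite -(big_imset (fun P => pauli C P *m X *m dag (pauli C P)) injphi) /=.
have -> : phi @: A = S => //.
apply/eqP; rewrite eqEcard; apply/andP; split.
  apply/subsetP => P /imsetP [a ha ->]; move: ha; rewrite inE => ha; exact: (Hphi a ha).1.
rewrite card_in_imset // hS (_ : A = [set~ z0]) ?cardsC1 ?card_ord ?subn1 //; apply/setP => x; by rewrite !inE.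
Qed.

Lemma conjAB (A B M : 'M[C]_d) (c : C) : A *m (c *: M) *m B = c *: (A *m M *m B).
Proof. by rewrite -scalemxAr -scalemxAl. Qed.

Lemma conjB (A B M N : 'M[C]_d) : A *m (M - N) *m B = A *m M *m B - A *m N *m B.
Proof. by rewrite mulmxBr mulmxBl. Qed.

Lemma dR_neq0 : (d%:R : C) != 0.
Proof. by rewrite pnatr_eq0 -lt0n d_gt0. Qed.

Lemma term_formula (W : 'M[C]_d) (S : {set I * I}) (X : 'M[C]_d) :
  unitary W -> #|S| = (d - 1)%N ->
  (forall a, nonzero_idx a -> exists2 P, P \in S &
      exists s : C, `|s| = 1 /\ W *m Zop C a *m dag W = s *: pauli C P) ->
  dag (dag W) *m Mchan (dag W *m X *m dag (dag W)) *m dag W =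
  ((d%:R - 1)^-1 : C) *: (\tr X *: 1%:M - (d%:R : C)^-1 *: (X + \sum_(P in S) pauli C P *m X *m dag (pauli C P))).
Proof.
move=> hW hS H; rewrite !dagK Mchan_formula conjAB conjB conjAB mulmx1 hW trace_conj //.
congr (_ *: (_ - _)).
rewrite -(key X hW hS H).
have -> : diagp (dag W *m X *m W) = (d%:R : C)^-1 *: \sum_(a : I) Zop C a *m (dag W *m X *m W) *m dag (Zop C a).
  by rewrite Zavg scalerA mulVf ?dR_neq0 // scale1r.
rewrite conjAB; congr (_ *: _).
rewrite mulmx_sumr mulmx_suml; apply: eq_bigr => a _.
by rewrite !dagM dagK !mulmxA.
Qed.

Lemma final_alg (v T Q : 'M[C]_d) (dd : C) :
  dd != 0 -> dd - 1 != 0 -> dd + 1 != 0 -> Q = dd *: T - v ->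
  (dd + 1) *: (((dd + 1)^-1 * (dd - 1)^-1) *: T)
  - (dd + 1) *: (((dd + 1)^-1 * (dd - 1)^-1 * dd^-1) *: v)
  - ((dd + 1)^-1 * (dd - 1)^-1 * dd^-1) *: Q = (dd * dd - 1)^-1 *: Q.
Proof.
move=> h0 h1 h2 HQ.
have -> : v = dd *: T - Q by rewrite HQ opprB addrC subrK.
rewrite !scalerA scalerBr !scalerA.
set a1 := (_ * _ * _)%R.
have e1 : (dd + 1) * ((dd + 1)^-1 * (dd - 1)^-1) = (dd + 1) * ((dd + 1)^-1 * (dd - 1)^-1 * dd^-1) * dd.
  by field; rewrite h0 h1 h2.
have e2 : (dd + 1) * ((dd + 1)^-1 * (dd - 1)^-1 * dd^-1) = (dd * dd - 1)^-1 + (dd + 1)^-1 * (dd - 1)^-1 * dd^-1.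
  rewrite (_ : dd * dd - 1 = (dd - 1) * (dd + 1)); last by ring.
  by field; rewrite h0 h1 h2.
rewrite e1 e2 scalerDl.
set A := (_ *: T). set B := (_ *: Q). set D := (_ *: Q).
by rewrite opprB [A + _]addrC subrK addrK.
Qed.

Lemma twirlV_formula (V : 'I_d.+1 -> 'M[C]_d) (S : 'I_d.+1 -> {set I * I})
  (SV : good_partition S V) (hn : (1 <= n)%N) (X : 'M[C]_d) :
  twirlV V X = ((4 ^ n)%:R - 1)^-1 *: \sum_(P in Qstar n) pauli C P *m X *m dag (pauli C P).
Proof.
case: SV => -[disj cup card _ unit] H.
set Q := \sum_(P in Qstar n) _.
set T := \tr X *: (1%:M : 'M[C]_d).
set R := fun j => \sum_(P in S j) pauli C P *m X *m dag (pauli C P).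
have HQ : Q = d%:R *: T - X by rewrite /Q Qsum.
have HR : \sum_j R j = Q by rewrite /Q -cup partition_disjoint_bigcup.
set dd : C := d%:R.
set e : C := ((d.+1)%:R)^-1.
set c : C := (dd - 1)^-1.
rewrite /twirlV /twirl.
transitivity (\sum_(j < d.+1) ((e * c) *: T - (e * c * dd^-1) *: X - (e * c * dd^-1) *: R j)).
  apply: eq_bigr => j _.
  rewrite (term_formula X (unit j) (card j) (H j).1) -/T -/c.
  by rewrite !scalerBr !scalerDr opprD addrA /dd /e /T !scalerA.
rewrite !sumrB !sumr_const card_ord -!scaler_nat -scaler_sumr HR.
have hd1 : (1 < d)%N by have := pow_lt (Ordinal hn).
have h0 : dd != 0 by exact: dR_neq0.
have h1 : dd - 1 != 0 by rewrite /dd -[X in _ - X](mulr1n 1) -natrB ?(ltnW hd1) // pnatr_eq0 subn_eq0 -ltnNge.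
have h2 : dd + 1 != 0 by rewrite /dd natr1 pnatr_eq0.
have -> : e = (dd + 1)^-1 by rewrite /e /dd natr1.
have -> : ((4 ^ n)%:R : C) = dd * dd by rewrite /dd -natrM -expnMn.
rewrite -natr1 -/dd /c; exact: final_alg.
Qed.

End Dag.

Theorem theorem1 (C : numClosedFieldType) (n : nat) (n_ge1 : (1 <= n)%N)
    (Ch : 'M[C]_(2 ^ n) -> 'M[C]_(2 ^ n)) (Ch_chan : is_channel Ch)
    (F_neq0 : ent_fid Ch != 0)
    (K : nat) (p : 'I_K -> C) (U : 'I_K -> 'M[C]_(2 ^ n))
    (p_ge0 : forall i, 0 <= p i) (p_sum1 : \sum_(i < K) p i = 1)
    (U_unitary : forall i, unitary (U i))
    (twirl_depol : forall rho, twirl p U Ch rho = depol (ent_fid Ch) rho)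
    (S : 'I_(2 ^ n).+1 -> {set 'I_(2 ^ n) * 'I_(2 ^ n)})
    (V : 'I_(2 ^ n).+1 -> 'M[C]_(2 ^ n))
    (SV : good_partition S V) :
  forall rho : 'M[C]_(2 ^ n),
    rho = (ent_fid Ch)^-1 *: twirl p U Ch rho
          - ((ent_fid Ch)^-1 - 1) *: twirlV V rho.
Proof.
move=> rho; rewrite twirl_depol (twirlV_formula SV n_ge1) /depol.
have E : forall (F D : C), F != 0 -> F^-1 * ((1 - F) / D) = (F^-1 - 1) * D^-1.
  by move=> F D hF; rewrite mulrA mulrBr mulr1 mulVf.
rewrite scalerDr !scalerA mulVf // scale1r E //.
by rewrite addrK.
Qed.
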